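(* Consider the sequences $(x_k),(y_k),(\nu_k),(\lambda_k)$ generated by Algorithm 2 (described in the context), and assume that at iteration $k\ge1$ the pair $(y_k,\nu_k)$ is computed in the approximate-solution branch, so that $\nu_k\in N_C(y_k)$ and $\|\lambda_k(F_{y_{k-1}}(y_k)+\nu_k)+y_k-x_{k-1}\|\le\hat\sigma\|y_k-y_{k-1}\|$. Then $$\frac{\lambda_kL}{2}\big\|\lambda_k(F(y_{k-1})+\nu_{k-1})+y_{k-1}-x_{k-1}\big\|\le\theta\ \Longrightarrow\ \frac{\lambda_kL}{2}\big\|\lambda_k(F(y_k)+\nu_k)+y_k-x_{k-1}\big\|\le\hat\theta.$$
   Context: Setting: $\mathcal H$ real Hilbert space; $C\subseteq\mathcal H$ nonempty closed convex; $N_C(x)=\{\nu:\langle\nu,y-x\rangle\le0\ \forall y\in C\}$ if $x\in C$, $N_C(x)=\emptyset$ otherwise. $F:C\to\mathcal H$ is monotone, continuously differentiable, and $\|F'(x)-F'(y)\|\le L\|x-y\|$ for all $x,y\in C$, with $L>0$; the set of $x$ with $0\in F(x)+N_C(x)$ is nonempty. For $y\in C$, $F_y(x):=F(y)+F'(y)(x-y)$. Parameters: $0\le\hat\sigma<1/2$; $0<\theta<(1-\hat\sigma)(1-2\hat\sigma)$; $\hat\theta:=\theta\big(\frac{\hat\sigma}{1-\hat\sigma}+\frac{\theta}{(1-\hat\sigma)^2}\big)$; $\eta>2\hat\theta/L$; $\tau:=\dfrac{2(\theta-\hat\theta)}{2\theta+\frac{\eta L}{2}+\sqrt{(2\theta+\frac{\eta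 L}{2})^2-4\theta(\theta-\hat\theta)}}$. Algorithm 2: input $x_0\in C$, $y_0:=x_0$, $\nu_0:=0$, $\lambda_1>0$ with $\lambda_1^2\|F(y_0)\|\le2\theta/L$. For $k=1,2,\dots$: if $F(y_{k-1})+\nu_{k-1}=0$, stop and return $y_{k-1}$. If $\frac{\lambda_kL}{2}\|\lambda_k(F(y_{k-1})+\nu_{k-1})+y_{k-1}-x_{k-1}\|\le\hat\theta$, set $y_k=y_{k-1}$, $\nu_k=\nu_{k-1}$; otherwise (approximate-solution branch) find any $(y_k,\nu_k)$ with $\nu_k\in N_C(y_k)$ and $\|\lambda_k(F_{y_{k-1}}(y_k)+\nu_k)+y_k-x_{k-1}\|\le\hat\sigma\|y_k-y_{k-1}\|$. Then, if $\lambda_k\|y_k-x_{k-1}\|\ge\eta$, set $x_k=x_{k-1}-\tau\lambda_k(F(y_k)+\nu_k)$ and $\lambda_{k+1}=(1-\tau)\lambda_k$; else set $x_k=x_{k-1}$ and $\lambda_{k+1}=\lambda_k/(1-\tau)$. Standing assumption: the algorithm never stops at the first test, i.e. $F(y_{k-1})+\nu_{k-1}\neq0$ for all $k$. *)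

(* Defs.v *)
(* R : realType, H a complete normed space whose
   norm comes from an inner product (i.e. a real Hilbert space). *)
From HB Require Import structures.
From mathcomp Require Import all_boot all_order all_algebra.
From mathcomp Require Import all_classical all_reals all_analysis.
Set Implicit Arguments. Unset Strict Implicit. Unset Printing Implicit Defensive.
Import Order.TTheory GRing.Theory Num.Theory.
Import numFieldNormedType.Exports.
Local Open Scope classical_set_scope.
Local Open Scope ring_scope.

Section Defs.
Variables (R : realType) (H : completeNormedModType R).

Definition is_inner_product (ip : H -> H -> R) : Prop :=
  [/\ (forall x y, ip x y = ip y x),
      (forall a x y z, ip (a *: x + y) z = a * ip x z + ip y z) &
      (forall x, `|x| ^+ 2 = ip x x)].

Definition in_normal_cone (ip : H -> H -> R) (C : set H) (x nu : H) : Prop :=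
  C x /\ forall y, C y -> ip nu (y - x) <= 0.

Definition monotone_on (ip : H -> H -> R) (C : set H) (F : H -> H) : Prop :=
  forall x y, C x -> C y -> 0 <= ip (F x - F y) (x - y).

Definition derivative_on (C : set H) (F : H -> H) (F' : H -> H -> H) : Prop :=
  forall y, C y ->
    [/\ (forall a u v, F' y (a *: u + v) = a *: F' y u + F' y v),
        continuous (F' y) &
        (forall eps : R, 0 < eps -> exists2 delta : R, 0 < delta &
           forall x, C x -> `|x - y| < delta ->
             `|F x - F y - F' y (x - y)| <= eps * `|x - y|)].

(* ||F'(x) - F'(y)||_op <= L ||x - y||, operator norm unfolded *)
Definition deriv_lipschitz_on (C : set H) (F' : H -> H -> H) (L : R) : Prop :=
  forall x y, C x -> C y -> forall v,
    `|F' x v - F' y v| <= L * `|x - y| * `|v|.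

(* continuity of y |-> F'(y) in operator norm on C *)
Definition deriv_continuous_on (C : set H) (F' : H -> H -> H) : Prop :=
  forall y, C y -> forall eps : R, 0 < eps -> exists2 delta : R, 0 < delta &
    forall x, C x -> `|x - y| < delta -> forall v,
      `|F' x v - F' y v| <= eps * `|v|.

Definition theta_hat (sigma_hat theta : R) : R :=
  theta * (sigma_hat / (1 - sigma_hat) + theta / (1 - sigma_hat) ^+ 2).

Definition tau_param (sigma_hat theta eta L : R) : R :=
  let th := theta_hat sigma_hat theta in
  let b := 2 * theta + eta * L / 2 in
  (2 * (theta - th)) / (b + Num.sqrt (b ^+ 2 - 4 * theta * (theta - th))).

Definition linF (F : H -> H) (F' : H -> H -> H) (y x : H) : H :=
  F y + F' y (x - y).

Definition algorithm2 (ip : H -> H -> R) (C : set H) (F : H -> H)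
  (F' : H -> H -> H) (L sigma_hat theta eta : R)
  (x y nu : nat -> H) (lam : nat -> R) : Prop :=
  let th := theta_hat sigma_hat theta in
  let tau := tau_param sigma_hat theta eta L in
  [/\ C (x 0%N) /\ y 0%N = x 0%N /\ nu 0%N = 0 /\ 0 < lam 1%N /\
      lam 1%N ^+ 2 * `|F (y 0%N)| <= 2 * theta / L,
      (* standing assumption: no stop *)
      (forall k, (1 <= k)%N -> F (y k.-1) + nu k.-1 != 0),
      (forall k, (1 <= k)%N ->
        if lam k * L / 2 * `|lam k *: (F (y k.-1) + nu k.-1) + y k.-1 - x k.-1|
             <= th
        then y k = y k.-1 /\ nu k = nu k.-1
        else in_normal_cone ip C (y k) (nu k) /\
             `|lam k *: (linF F F' (y k.-1) (y k) + nu k) + y k - x k.-1|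
               <= sigma_hat * `|y k - y k.-1|) &
      (forall k, (1 <= k)%N ->
        if eta <= lam k * `|y k - x k.-1|
        then x k = x k.-1 - (tau * lam k) *: (F (y k) + nu k) /\
             lam k.+1 = (1 - tau) * lam k
        else x k = x k.-1 /\ lam k.+1 = lam k / (1 - tau))].

End Defs.

(* Main.v *)
Require Import Defs.
From HB Require Import structures.
From mathcomp Require Import all_boot all_order all_algebra.
From mathcomp Require Import all_classical all_reals all_analysis.
From mathcomp Require Import ring lra.
Import Order.TTheory GRing.Theory Num.Theory.
Import numFieldNormedType.Exports.
Local Open Scope classical_set_scope.
Local Open Scope ring_scope.

Lemma zid2 (V : zmodType) (A B Cc U X : V) : A + Cc + U - X = B + Cc + U - X + (A - B).
Proof.
by rewrite [RHS]addrC -!addrA addKr.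
Qed.

Section IP.
Variables (R : realType) (H : completeNormedModType R) (ip : H -> H -> R).
Hypothesis hip : is_inner_product ip.

Lemma ipDl a b c : ip (a + b) c = ip a c + ip b c.
Proof. by case: hip => _ h _; have := h 1 a b c; rewrite scale1r mul1r. Qed.
Lemma ipZl k a c : ip (k *: a) c = k * ip a c.
Proof.
case: hip => _ h _.
have h0 : ip 0 c = 0.
  by have := h 1 0 0 c; rewrite scale1r addr0 mul1r; lra.
by have := h k a 0 c; rewrite addr0 h0 addr0.
Qed.
Lemma ipNl a c : ip (- a) c = - ip a c.
Proof. by rewrite -scaleN1r ipZl mulN1r. Qed.
Lemma ipBl a b c : ip (a - b) c = ip a c - ip b c.
Proof. by rewrite ipDl ipNl. Qed.
Lemma ipC a b : ip a b = ip b a.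
Proof. by case: hip. Qed.
Lemma ipDr a b c : ip c (a + b) = ip c a + ip c b.
Proof. by rewrite !(ipC c) ipDl. Qed.
Lemma ipBr a b c : ip c (a - b) = ip c a - ip c b.
Proof. by rewrite !(ipC c) ipBl. Qed.
Lemma ipZr k a c : ip c (k *: a) = k * ip c a.
Proof. by rewrite !(ipC c) ipZl. Qed.
Lemma ip0l c : ip 0 c = 0.
Proof. by rewrite -[0 : H](scale0r 0) ipZl mul0r. Qed.
Lemma ipnorm a : ip a a = `|a| ^+ 2.
Proof. by case: hip. Qed.

Lemma CS a b : ip a b <= `|a| * `|b|.
Proof.
have h1 : `|a + b| ^+ 2 = `|a| ^+ 2 + 2 * ip a b + `|b| ^+ 2.
  by rewrite -!ipnorm ipDl !ipDr (ipC b a); lra.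
have h2 : `|a - b| ^+ 2 = `|a| ^+ 2 - 2 * ip a b + `|b| ^+ 2.
  by rewrite -!ipnorm ipBl !ipBr (ipC b a); lra.
have t1 : `|a + b| <= `|a| + `|b| by apply: ler_normD.
have t2 : `| `|a| - `|b| | <= `|a - b| by apply: ler_dist_dist.
have n1 : 0 <= `|a + b| by [].
have n2 : 0 <= `|a| by [].
have n3 : 0 <= `|b| by [].
have t3 : (`|a| - `|b|) ^+ 2 <= `|a - b| ^+ 2.
  by rewrite -real_normK ?num_real // lerXn2r // ?nnegrE.
have t4 : `|a + b| ^+ 2 <= (`|a| + `|b|) ^+ 2 by rewrite lerXn2r // ?nnegrE // addr_ge0.
nra.
Qed.
End IP.

Section Creep.
Variable R : realType.

Lemma creep (a : R -> R) :
  a 0 <= 0 ->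
  (forall t, 0 <= t -> t <= 1 -> forall e, 0 < e -> exists2 d, 0 < d &
     forall s, 0 <= s -> s <= 1 -> `|s - t| < d ->
       (t <= s -> a s <= a t + e * (s - t)) /\ (s <= t -> a t <= a s + e * (t - s))) ->
  a 1 <= 0.
Proof.
move=> a0 hloc.
suff he : forall e, 0 < e -> a 1 <= e.
  case: (leP (a 1) 0) => // h1.
  have := he (a 1 / 2); lra.
move=> e e0.
pose S := [set t : R | [/\ 0 <= t, t <= 1 & forall u, 0 <= u -> u <= t -> a u <= e * u]].
have S0 : S 0.
  split => // u u0 u1; have -> : u = 0 by apply/eqP; rewrite eq_le u0 u1.
  by rewrite mulr0.
have hS : has_sup S.
  split; first by exists 0.
  by exists 1 => t [].
pose c := sup S.
have c1 : c <= 1 by apply: ge_sup; [exists 0 | move=> t []].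
have c0 : 0 <= c by apply: sup_upper_bound.
have cl1 : forall u, 0 <= u -> u < c -> a u <= e * u.
  move=> u u0 uc.
  have cu0 : 0 < c - u by rewrite subr_gt0.
  have [t [t0 t1 ht] ut] := sup_adherent cu0 hS.
  apply: ht => //; rewrite -/c in ut; lra.
have cl2 : a c <= e * c.
  have [->|cn0] := eqVneq c 0; first by rewrite mulr0.
  have cp : 0 < c by rewrite lt_neqAle eq_sym cn0 c0.
  have [d d0 hd] := hloc c c0 c1 e e0.
  pose u := Num.max 0 (c - d / 2).
  have u0 : 0 <= u by rewrite le_max lexx.
  have u1 : c - d / 2 <= u by rewrite le_max lexx orbT.
  have u2 : u < c by rewrite gt_max cp /=; lra.
  have := hd u u0 ltac:(lra) ltac:(rewrite ler0_norm; lra).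
  case=> _ /(_ (ltW u2)) h.
  have := cl1 u u0 u2; lra.
have cS : S c.
  split => // u u0 uc.
  by case: (leP c u) => [cu|uc']; [have -> : u = c by apply/eqP; rewrite eq_le uc cu | exact: cl1].
suff c1' : c = 1 by move: cl2; rewrite c1' mulr1.
apply/eqP; rewrite eq_le c1 /=; apply/negP => /negP; rewrite -ltNge => clt.
have [d d0 hd] := hloc c c0 c1 e e0.
pose s := Num.min 1 (c + d / 2).
have s1 : s <= 1 by rewrite ge_min lexx.
have s2 : s <= c + d / 2 by rewrite ge_min lexx orbT.
have s3 : c < s by rewrite lt_min clt /=; lra.
have Ss : S s.
  split => //; first lra.
  move=> u u0 us.
  case: (leP u c) => [uc|cu]; first by case: cS => _ _; apply.
  have := hd u u0 ltac:(lra) ltac:(rewrite ger0_norm; lra).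
  case=> /(_ (ltW cu)) h _; lra.
have := sup_upper_bound hS Ss; rewrite -/c; lra.
Qed.
End Creep.

Lemma zid (V : zmodType) (A B P X Y : V) : A - P - X - (B - P - Y) = A - B - (X - Y).
Proof.
rewrite !opprD !opprK !addrA.
by rewrite [A - P - X - B]addrAC [A - P - B]addrAC [A - B - P - X + P]addrAC subrK.
Qed.

Section Seg.
Variables (R : realType) (H : completeNormedModType R).

Lemma seg_in (C : set H) (cC : convex_set C) (a b : H) (t : R) :
  C a -> C b -> 0 <= t -> t <= 1 -> C (a + t *: (b - a)).
Proof.
move=> Ca Cb t0 t1.
have := cC b a (Itv01 t0 t1) (mem_set Cb) (mem_set Ca).
move/set_mem.
congr C.
change (t *: b + (1 - t) *: a = a + t *: (b - a)).
by rewrite scalerBl scale1r scalerBr addrCA addrA.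
Qed.

Lemma lin0 (f : H -> H) : (forall a u v, f (a *: u + v) = a *: f u + f v) -> f 0 = 0.
Proof.
move=> h; have := h 1 0 0; rewrite !scale1r addr0.
by move/(congr1 (fun w => w - f 0)); rewrite subrr addrK => <-.
Qed.

Lemma linZ (f : H -> H) : (forall a u v, f (a *: u + v) = a *: f u + f v) ->
  forall a u, f (a *: u) = a *: f u.
Proof. by move=> h a u; have := h a u 0; rewrite addr0 (lin0 _ h) addr0. Qed.

Lemma taylor (C : set H) (F : H -> H) (F' : H -> H -> H) (L : R)
  (cC : convex_set C) (hd : derivative_on C F F') (hl : deriv_lipschitz_on C F' L)
  (L0 : 0 <= L) (y0 y1 : H) : C y0 -> C y1 ->
  `|F y1 - F y0 - F' y0 (y1 - y0)| <= L / 2 * `|y1 - y0| ^+ 2.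
Proof.
move=> C0 C1.
set h := y1 - y0. set d := `|h|.
have d0 : 0 <= d by apply: normr_ge0.
pose z t := y0 + t *: h.
pose g t := F (z t) - F y0 - t *: F' y0 h.
pose a t := `|g t| - L / 2 * t ^+ 2 * d ^+ 2.
have : a 1 <= 0.
  apply: creep.
    rewrite /a /g /z scale0r addr0 subrr scale0r subr0 normr0; lra.
  move=> t t0 t1 e e0.
  have Czt : C (z t) by apply: seg_in.
  have [lin _ dif] := hd _ Czt.
  have ep : 0 < e / (2 * (d + 1)) by apply: divr_gt0 => //; lra.
  have [dl dl0 hdl] := dif _ ep.
  have dp1 : 0 < d + 1 by lra.
  have Lp1 : 0 < L * d ^+ 2 + 1 by have := mulr_ge0 L0 (sqr_ge0 d); lra.
  exists (Num.min (dl / (d + 1)) (e / (L * d ^+ 2 + 1))).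
    by rewrite lt_min !divr_gt0.
  move=> s s0 s1; rewrite lt_min => /andP [hs1 hs2].
  have Czs : C (z s) by apply: seg_in.
  have zd : z s - z t = (s - t) *: h by rewrite /z opprD addrACA subrr add0r scalerBl.
  have nzd : `|z s - z t| = `|s - t| * d by rewrite zd normrZ.
  have r0 : 0 <= `|s - t| by [].
  have r1 : `|s - t| * (d + 1) < dl by rewrite -ltr_pdivlMr.
  have nzl : `|z s - z t| < dl by rewrite nzd; nra.
  have K0 := hdl _ Czs nzl.
  have lz : F' (z t) (z s - z t) = (s - t) *: F' (z t) h by rewrite zd (linZ _ lin).
  have LL := hl _ _ Czt C0 h.
  have ztd : `|z t - y0| = t * d by rewrite /z [y0 + _]addrC addrK normrZ ger0_norm.
  rewrite ztd in LL.
  have gid : g s - g t = (F (z s) - F (z t) - F' (z t) (z s - z t)) +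
                         (s - t) *: (F' (z t) h - F' y0 h).
    rewrite lz /g scalerBr addrA subrK scalerBl; exact: zid.
  have K1 : `|g s - g t| <= e / (2 * (d + 1)) * (`|s - t| * d) + `|s - t| * (L * (t * d) * d).
    rewrite gid; apply: le_trans (ler_normD _ _) _; apply: lerD; first by rewrite -nzd.
    by rewrite normrZ; apply: ler_wpM2l.
  have T1 : `|g s| <= `|g t| + `|g s - g t|.
    by rewrite -{1}(subrK (g t) (g s)) addrC; apply: ler_normD.
  have T2 : `|g t| <= `|g s| + `|g s - g t|.
    rewrite (distrC (g s)) -{1}(subrK (g s) (g t)) addrC; apply: ler_normD.
  have E2 : e / (2 * (d + 1)) * d <= e / 2.
    have -> : e / (2 * (d + 1)) * d = e / 2 * (d / (d + 1)).
      by field; lra.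
    have q1 : d / (d + 1) <= 1 by rewrite ler_pdivrMr //; lra.
    have : 0 <= e / 2 by lra.
    nra.
  have E2r : `|s - t| * (e / (2 * (d + 1)) * d) <= `|s - t| * (e / 2) by apply: ler_wpM2l.
  have K3 : `|s - t| * (L * d ^+ 2) <= e.
    have : `|s - t| * (L * d ^+ 2 + 1) < e by rewrite -ltr_pdivlMr.
    lra.
  have K3r : `|s - t| * (`|s - t| * (L * d ^+ 2)) <= `|s - t| * e by apply: ler_wpM2l.
  rewrite /a; split => hts.
    have hr : `|s - t| = s - t by rewrite ger0_norm // subr_ge0.
    rewrite hr in K1 E2r K3r.
    have : 0 <= L / 2 * (s - t) ^+ 2 * d ^+ 2.
      by apply: mulr_ge0; [apply: mulr_ge0; [lra | apply: sqr_ge0] | apply: sqr_ge0].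
    nra.
  have hr : `|s - t| = t - s by rewrite ler0_norm ?opprB // subr_le0.
  rewrite hr in K1 E2r K3r.
  nra.
rewrite /a /g /z !scale1r.
have -> : y0 + h = y1 by rewrite /h addrC subrK.
rewrite expr1n mulr1; lra.
Qed.
End Seg.

Arguments CS [R H ip] hip a b.
Arguments ipDl [R H ip] hip a b c.
Arguments ipZl [R H ip] hip k a c.
Arguments ipZr [R H ip] hip k a c.
Arguments ipBl [R H ip] hip a b c.
Arguments ipBr [R H ip] hip a b c.
Arguments ipDr [R H ip] hip a b c.
Arguments ipnorm [R H ip] hip a.
Arguments ip0l [R H ip] hip c.

Section Psd.
Variables (R : realType) (H : completeNormedModType R) (ip : H -> H -> R).
Hypothesis hip : is_inner_product ip.

Lemma psd (C : set H) (F : H -> H) (F' : H -> H -> H)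
  (cC : convex_set C) (mono : monotone_on ip C F) (hd : derivative_on C F F')
  (y0 y1 : H) : C y0 -> C y1 -> 0 <= ip (F' y0 (y1 - y0)) (y1 - y0).
Proof.
move=> C0 C1.
set h := y1 - y0. set d := `|h|.
have d0 : 0 <= d by apply: normr_ge0.
set q := ip (F' y0 h) h.
case: (leP 0 q) => // qn.
have [lin _ dif] := hd _ C0.
have dp1 : 0 < d ^+ 2 + 1 by have := sqr_ge0 d; lra.
have ep : 0 < - q / (d ^+ 2 + 1) by apply: divr_gt0 => //; lra.
have [dl dl0 hdl] := dif _ ep.
have dq : - q / (d ^+ 2 + 1) * d ^+ 2 < - q.
  have -> : - q / (d ^+ 2 + 1) * d ^+ 2 = - q * (d ^+ 2 / (d ^+ 2 + 1)).
    by field; lra.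
  have : d ^+ 2 / (d ^+ 2 + 1) < 1 by rewrite ltr_pdivrMr //; lra.
  nra.
pose t := Num.min 1 (dl / (2 * (d + 1))).
have t1 : t <= 1 by rewrite ge_min lexx.
have t2 : t <= dl / (2 * (d + 1)) by rewrite ge_min lexx orbT.
have tp : 0 < t by rewrite lt_min ltr01 /= divr_gt0 //; lra.
pose z := y0 + t *: h.
have Cz : C z by apply: seg_in => //; lra.
have zy : z - y0 = t *: h by rewrite /z [y0 + _]addrC addrK.
have nz : `|z - y0| = t * d by rewrite zy normrZ ger0_norm //; lra.
have nzl : `|z - y0| < dl.
  rewrite nz.
  have : t * (2 * (d + 1)) <= dl by rewrite -ler_pdivlMr //; lra.
  nra.
have K := hdl _ Cz nzl.
set r := F z - F y0 - F' y0 (z - y0) in K.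
have Fz : F z - F y0 = r + t *: F' y0 h by rewrite /r -(@linZ _ _ _ lin) -zy subrK.
have M := mono _ _ Cz C0.
rewrite Fz zy (ipDl hip) !(ipZl hip) !(ipZr hip) -/q in M.
have CSr := CS hip r h.
rewrite nz -/d in K.
have : t * ip r h <= t * (- q / (d ^+ 2 + 1) * (t * d) * d).
  apply: ler_wpM2l; first lra.
  apply: le_trans CSr _; apply: ler_wpM2r => //.
have tt : 0 < t * t by apply: mulr_gt0.
nra.
Qed.
End Psd.

Arguments psd [R H ip] hip [C F F'] cC mono hd [y0 y1].
Arguments taylor [R H C F F' L] cC hd hl L0 [y0 y1].

Lemma core (R : realType) (H : completeNormedModType R)
  (ip : H -> H -> R) (C : set H) (F : H -> H) (F' : H -> H -> H)
  (L sg th : R) (hip : is_inner_product ip) (cC : convex_set C)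
  (mono : monotone_on ip C F) (hd : derivative_on C F F')
  (hl : deriv_lipschitz_on C F' L) (L0 : 0 < L) (s0 : 0 <= sg) (s1 : sg < 1 / 2)
  (th0 : 0 < th) (l : R) (xp yp np yk nk : H) :
  C yp -> C yk -> (forall z, C z -> ip np (z - yp) <= 0) ->
  (forall z, C z -> ip nk (z - yk) <= 0) ->
  theta_hat sg th < l * L / 2 * `|l *: (F yp + np) + yp - xp| ->
  l * L / 2 * `|l *: (F yp + np) + yp - xp| <= th ->
  `|l *: (linF F F' yp yk + nk) + yk - xp| <= sg * `|yk - yp| ->
  l * L / 2 * `|l *: (F yk + nk) + yk - xp| <= theta_hat sg th.
Proof.
move=> Cyp Cyk hnp hnk hgt hle he.
set v := l *: (F yp + np) + yp - xp in hgt hle.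
set n := `|v| in hgt hle.
set e := l *: (linF F F' yp yk + nk) + yk - xp in he.
set h := yk - yp in he *.
set d := `|h| in he *.
have d0 : 0 <= d by apply: normr_ge0.
have n0 : 0 <= n by apply: normr_ge0.
have s2 : 0 < 1 - sg by lra.
have q0 : 0 < th / (1 - sg) by apply: divr_gt0.
have thE : theta_hat sg th = sg * (th / (1 - sg)) + (th / (1 - sg)) ^+ 2.
  by rewrite /theta_hat; field; lra.
have thp : 0 < theta_hat sg th.
  rewrite thE; have := mulr_ge0 s0 (ltW q0); have := exprn_gt0 2 q0; lra.
have lp : 0 < l.
  case: (ltP 0 l) => // l0.
  have : l * L / 2 * n <= 0.
    apply: mulr_le0_ge0 => //; apply: mulr_le0_ge0; last by lra.
    by apply: mulr_le0_ge0 => //; apply: ltW.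
  lra.
have qpsd := psd hip cC mono hd Cyp Cyk; rewrite -/h in qpsd.
have nk1 := hnk _ Cyp; have np1 := hnp _ Cyk.
rewrite !(ipBr hip) in nk1 np1.
have Ee : ip e h = l * (ip (F yp) h + ip (F' yp h) h + ip nk h) + ip yk h - ip xp h.
  by rewrite /e /linF -/h !(ipBl hip, ipDl hip, ipZl hip).
have Ev : ip v h = l * (ip (F yp) h + ip np h) + ip yp h - ip xp h.
  by rewrite /v !(ipBl hip, ipDl hip, ipZl hip).
have hh : ip yk h - ip yp h = d ^+ 2 by rewrite -(ipBl hip) (ipnorm hip).
have ipn1 : ip nk h = ip nk yk - ip nk yp by rewrite /h (ipBr hip).
have ipn2 : ip np h = ip np yk - ip np yp by rewrite /h (ipBr hip).
have CSe := CS hip (e - v) h.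
rewrite (ipBl hip) in CSe.
have nev : `|e - v| <= `|e| + n by apply: ler_normB.
have lq : 0 <= l * ip (F' yp h) h by apply: mulr_ge0 => //; apply: ltW.
have lnn : 0 <= l * (ip nk h - ip np h) by apply: mulr_ge0; [apply: ltW | lra].
have key : d ^+ 2 <= (sg * d + n) * d.
  apply: le_trans (_ : `|e - v| * d <= _); last first.
    by apply: ler_wpM2r => //; lra.
  apply: le_trans CSe; rewrite Ee Ev.
  have : l * (ip (F yp) h + ip (F' yp h) h + ip nk h) - l * (ip (F yp) h + ip np h)
     = l * ip (F' yp h) h + l * (ip nk h - ip np h) by ring.
  lra.
have dn : (1 - sg) * d <= n.
  have [->|dp] := eqVneq d 0; first by rewrite mulr0.
  have dpos : 0 < d by rewrite lt_neqAle eq_sym dp d0.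
  nra.
have T := taylor cC hd hl (ltW L0) Cyp Cyk.
rewrite -/h -/d in T.
have wid : l *: (F yk + nk) + yk - xp = e + l *: (F yk - linF F F' yp yk).
  rewrite /e [l *: (F yk + nk)]scalerDr [l *: (linF _ _ _ _ + nk)]scalerDr scalerBr; exact: zid2.
have lF : F yk - linF F F' yp yk = F yk - F yp - F' yp h by rewrite /linF opprD addrA.
have hw : `|l *: (F yk + nk) + yk - xp| <= sg * d + l * (L / 2 * d ^+ 2).
  rewrite wid; apply: le_trans (ler_normD _ _) _; apply: lerD => //.
  by rewrite normrZ ger0_norm ?lF; [apply: ler_wpM2l => //; apply: ltW | apply: ltW].
set p := l * L / 2 * d.
have p0 : 0 <= p by rewrite /p; apply: mulr_ge0 => //; apply: mulr_ge0; [apply: mulr_ge0|]; lra.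
have pq : p <= th / (1 - sg).
  rewrite ler_pdivlMr // /p.
  have : l * L / 2 * ((1 - sg) * d) <= l * L / 2 * n.
    apply: ler_wpM2l => //; apply: mulr_ge0; [apply: mulr_ge0|]; lra.
  lra.
have lw : l * L / 2 * `|l *: (F yk + nk) + yk - xp| <= sg * p + p ^+ 2.
  have : l * L / 2 * `|l *: (F yk + nk) + yk - xp| <= l * L / 2 * (sg * d + l * (L / 2 * d ^+ 2)).
    apply: ler_wpM2l => //; apply: mulr_ge0; [apply: mulr_ge0|]; lra.
  have -> : l * L / 2 * (sg * d + l * (L / 2 * d ^+ 2)) = sg * p + p ^+ 2 by rewrite /p; ring.
  by [].
rewrite thE; apply: le_trans lw _.
have := mulr_ge0 s0 (ltW q0).
nra.
Qed.

Arguments core [R H ip C F F' L sg th] hip cC mono hd hl L0 s0 s1 th0 [l xp yp np yk nk].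

Theorem proposition4p2 (R : realType) (H : completeNormedModType R)
  (ip : H -> H -> R) (C : set H) (F : H -> H) (F' : H -> H -> H)
  (L sigma_hat theta eta : R) (x y nu : nat -> H) (lam : nat -> R) :
  is_inner_product ip ->
  C !=set0 -> closed C -> convex_set C ->
  monotone_on ip C F -> derivative_on C F F' -> deriv_continuous_on C F' ->
  0 < L -> deriv_lipschitz_on C F' L ->
  (exists2 xs, C xs & in_normal_cone ip C xs (- F xs)) ->
  0 <= sigma_hat -> sigma_hat < 1 / 2 ->
  0 < theta -> theta < (1 - sigma_hat) * (1 - 2 * sigma_hat) ->
  2 * theta_hat sigma_hat theta / L < eta ->
  algorithm2 ip C F F' L sigma_hat theta eta x y nu lam ->
  forall k : nat, (1 <= k)%N ->
  (* (y_k, nu_k) computed in the approximate-solution branch *)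
  theta_hat sigma_hat theta <
    lam k * L / 2 * `|lam k *: (F (y k.-1) + nu k.-1) + y k.-1 - x k.-1| ->
  lam k * L / 2 * `|lam k *: (F (y k.-1) + nu k.-1) + y k.-1 - x k.-1|
    <= theta ->
  lam k * L / 2 * `|lam k *: (F (y k) + nu k) + y k - x k.-1|
    <= theta_hat sigma_hat theta.
Proof.
move=> hip _ _ cC mono hd _ L0 hl _ s0 s1 th0 _ _ alg k k1 hgt hle.
case: alg => [[Cx0 [y0e [nu0e _]]] _ hstep _].
have inv : forall j, in_normal_cone ip C (y j) (nu j).
  elim=> [|j IH].
    by rewrite y0e nu0e; split => // z _; rewrite (ip0l hip).
  have := hstep j.+1 isT; rewrite /=.
  by case: ifP => _ [] => [-> -> | ? _].
have := hstep k k1.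
rewrite leNgt hgt /= => -[[Cy hny] he].
have [Cyp hnyp] := inv k.-1.
exact: (core hip cC mono hd hl L0 s0 s1 th0 Cyp Cy hnyp hny hgt hle he).
Qed.
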